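(* Let $E$ be a graph and $k$ a field. (a) Let $\alpha\in\partial E$. If $W$ is a $\rho_{E,k}$-invariant subspace of $V_{([\alpha],k)}:=\mathrm{span}_k[\alpha]$ and $\beta\in W$ for some $\beta\in[\alpha]$, then $W=V_{([\alpha],k)}$. (b) Let $\alpha\in\partial E$. If $\mathcal{K}$ is a closed $\pi_E$-invariant subspace of $\mathcal{H}_{[\alpha]}:=\ell^2([\alpha])$ and $\beta\in\mathcal{K}$ for some $\beta\in[\alpha]$, then $\mathcal{K}=\mathcal{H}_{[\alpha]}$.
   Context: A graph $E=(E^0,E^1,r,s)$ has vertex set $E^0$, edge set $E^1$, range and source maps. A vertex is singular if it emits no edges or infinitely many edges, regular otherwise. Finite paths include vertices (length $0$) and sequences $e_1\cdots e_n$ with $r(e_i)=s(e_{i+1})$; infinite paths are sequences $e_1e_2\cdots$. Boundary paths $\partial E$: infinite paths together with finite paths whose range is singular. The shift $\sigma_E$ removes the first edge (fixes vertices; sends a single edge $e$ to $r(e)$); $\alpha,\beta\in\partial E$ are shift-tail equivalent if $\sigma_E^m(\alpha)=\sigma_E^n(\beta)$ for some $m,n\in\mathbb{N}$; $[\alpha]$ is the class of $\alpha$. $L_k(E)$: universal $k$-algebra generated by pairwise orthogonal idempotents $p_v$ and elements $s_e,s_e^*$ with $p_{s(e)}s_e=s_e=s_ep_{r(e)}$, $p_{r(e)}s_e^*=s_e^*=s_e^*p_{s(e)}$, $s_e^*s_f=\delta_{e,f}p_{r(e)}$, $p_v=\sum_{s(e)=v}s_es_e^*$ for regular $v$. $C^*(E)$: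 universal $C^*$-algebra generated by mutually orthogonal projections $p_v$ and partial isometries $s_e$ with mutually orthogonal ranges, $s_e^*s_e=p_{r(e)}$, $s_es_e^*\le p_{s(e)}$, $p_v=\sum_{s(e)=v}s_es_e^*$ for regular $v$. $V_{(\partial E,k)}$ is the $k$-vector space with basis $\partial E$ and $\mathcal{H}_{\partial E}=\ell^2(\partial E)$; $\rho_{E,k}:L_k(E)\to\mathrm{End}_kV_{(\partial E,k)}$ and $\pi_E:C^*(E)\to\mathbb{B}(\mathcal{H}_{\partial E})$ are given on $\alpha\in\partial E$ by: $p_v\alpha=\alpha$ if $s(\alpha)=v$, else $0$; $s_e\alpha=e\alpha$ if $s(\alpha)=r(e)$, else $0$; $s_e^*\alpha=\alpha'$ if $\alpha=e\alpha'$, else $0$. *)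

(* Defs.v *)
From mathcomp Require Import all_boot all_algebra.
From mathcomp Require Import complex reals.
From Stdlib Require Import ClassicalEpsilon.
From Stdlib Require List.

Set Implicit Arguments.
Unset Strict Implicit.
Unset Printing Implicit Defensive.

Local Open Scope ring_scope.

(* A directed graph E = (E^0, E^1, r, s); no countability/finiteness assumed. *)
Record graph := Graph {
  vert : Type;
  edge : Type;
  rng : edge -> vert;
  src : edge -> vert }.

Section Graphs.
Variable E : graph.

Definition regular (v : vert E) : Prop :=
  (exists e, src e = v) /\
  (exists l : seq (edge E), forall e, src e = v -> List.In e l).

Definition singular (v : vert E) : Prop := ~ regular v.

(* Raw paths: a vertex (length 0), a nonempty finite edge sequence e :: l,
   or an infinite edge sequence. *)
Inductive rpath :=
  | PV of vert E
  | PF of edge E & seq (edge E)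
  | PI of (nat -> edge E).

Fixpoint chain (e : edge E) (l : seq (edge E)) : Prop :=
  match l with
  | [::] => True
  | e' :: l' => rng e = src e' /\ chain e' l'
  end.

Definition is_bpath (p : rpath) : Prop :=
  match p with
  | PV v => singular v
  | PF e l => chain e l /\ singular (rng (last e l))
  | PI f => forall n, rng (f n) = src (f n.+1)
  end.

Definition psrc (p : rpath) : vert E :=
  match p with
  | PV v => v
  | PF e _ => src e
  | PI f => src (f 0%N)
  end.

Definition shift (p : rpath) : rpath :=
  match p with
  | PV v => PV v
  | PF e [::] => PV (rng e)
  | PF _ (e' :: l) => PF e' l
  | PI f => PI (fun n => f n.+1)
  end.

(* concatenation e p (meaningful when psrc p = rng e) *)
Definition prepend (e : edge E) (p : rpath) : rpath :=
  match p with
  | PV _ => PF e [::]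
  | PF e' l => PF e (e' :: l)
  | PI f => PI (fun n => if n is m.+1 then f m else e)
  end.

Definition tail_equiv (a b : rpath) : Prop :=
  exists m n : nat, iter m shift a = iter n shift b.

Definition in_class (a b : rpath) : Prop := is_bpath b /\ tail_equiv a b.

(* Vectors are coefficient functions on paths.  The action of the
   generators p_v, s_e, s_e^* (the formulas defining rho_{E,k} resp. pi_E
   on basis vectors, extended to coefficient functions). *)
Definition opP (K : zmodType) (v : vert E) (f : rpath -> K) : rpath -> K :=
  fun x => if excluded_middle_informative (psrc x = v) then f x else 0.

Definition opS (K : zmodType) (e : edge E) (f : rpath -> K) : rpath -> K :=
  fun x => if excluded_middle_informative
                (exists y, x = prepend e y /\ psrc y = rng e)
           then f (shift x) else 0.

Definition opSs (K : zmodType) (e : edge E) (f : rpath -> K) : rpath -> K :=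
  fun y => if excluded_middle_informative (psrc y = rng e)
           then f (prepend e y) else 0.

Definition delta (K : pzRingType) (b : rpath) : rpath -> K :=
  fun x => if excluded_middle_informative (x = b) then 1 else 0.

Definition gen_invariant (K : zmodType) (W : (rpath -> K) -> Prop) : Prop :=
  (forall v f, W f -> W (opP v f)) /\
  (forall e f, W f -> W (opS e f)) /\
  (forall e f, W f -> W (opSs e f)).

(* ---- (a) V_([alpha],k) = span_k [alpha] : finitely supported on [alpha] *)
Definition Vcls (k : fieldType) (a : rpath) (f : rpath -> k) : Prop :=
  (exists l : seq rpath, forall x, f x <> 0 -> List.In x l) /\
  (forall x, f x <> 0 -> in_class a x).

Definition subspace (k : fieldType) (W : (rpath -> k) -> Prop) : Prop :=
  W (fun _ => 0) /\
  (forall f g, W f -> W g -> W (fun x => f x + g x)) /\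
  (forall (c : k) f, W f -> W (fun x => c * f x)).

(* ---- (b) H_[alpha] = l^2([alpha]) with complex coefficients *)
Definition sqmod (R : realType) (z : R[i]) : R :=
  let: Complex a b := z in a ^+ 2 + b ^+ 2.

Definition sqsum (R : realType) (l : seq rpath) (f : rpath -> R[i]) : R :=
  \sum_(x <- l) sqmod (f x).

Definition l2 (R : realType) (f : rpath -> R[i]) : Prop :=
  exists B : R, forall l, List.NoDup l -> sqsum l f <= B.

Definition Hcls (R : realType) (a : rpath) (f : rpath -> R[i]) : Prop :=
  l2 f /\ (forall x, f x <> 0 -> in_class a x).

Definition l2_conv (R : realType) (u : nat -> rpath -> R[i]) (f : rpath -> R[i])
  : Prop :=
  forall eps : R, 0 < eps -> exists N : nat, forall n : nat, (N <= n)%N ->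
    forall l, List.NoDup l -> sqsum l (fun x => u n x - f x) <= eps.

Definition csubspace (R : realType) (K : (rpath -> R[i]) -> Prop) : Prop :=
  K (fun _ => 0) /\
  (forall f g, K f -> K g -> K (fun x => f x + g x)) /\
  (forall (c : R[i]) f, K f -> K (fun x => c * f x)).

Definition l2_closed (R : realType) (a : rpath) (K : (rpath -> R[i]) -> Prop)
  : Prop :=
  forall (u : nat -> rpath -> R[i]) f,
    (forall n, K (u n)) -> Hcls a f -> l2_conv u f -> K f.

End Graphs.

Arguments PV {E}.
Arguments PF {E}.
Arguments PI {E}.

(* Main.v *)
Require Import Defs.
From mathcomp Require Import all_boot all_order all_algebra.
From mathcomp Require Import complex reals classical_sets boolp.
From Stdlib Require Import ClassicalEpsilon FunctionalExtensionality.
From Stdlib Require List.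

Set Implicit Arguments.
Unset Strict Implicit.
Unset Printing Implicit Defensive.
Import Order.TTheory GRing.Theory Num.Theory.
Local Open Scope ring_scope.

Section Gen.
Variable E : graph.

Lemma decomp (x : rpath E) : is_bpath x -> shift x = x \/
  exists e, x = prepend e (shift x) /\ psrc (shift x) = rng e.
Proof.
case: x => [v|e l|f] /=.
- by left.
- case: l => [|e' l] /= H; right; exists e; split => //.
  by case: H => [[H _] _].
- move=> H; right; exists (f 0%N); split; last by rewrite /= H.
  congr PI; apply functional_extensionality => -[|n] //.
Qed.

Lemma shift_bpath (x : rpath E) : is_bpath x -> is_bpath (shift x).
Proof.
case: x => [v|e [|e' l]|f] //=.
- by case.
- by case=> [[_ H1] H2].
Qed.

Lemma shift_prepend e (y : rpath E) : psrc y = rng e -> shift (prepend e y) = y.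
Proof. by case: y => [v|e' l|f] //= <-. Qed.

Variables (K : pzRingType) (W : (rpath E -> K) -> Prop).
Hypothesis HW : gen_invariant W.

Lemma opSs_delta e (b : rpath E) : b = prepend e (shift b) -> psrc (shift b) = rng e ->
  opSs e (delta K b) = delta K (shift b).
Proof.
move=> Hb Hs; apply functional_extensionality => y; rewrite /opSs /delta.
case: (excluded_middle_informative (psrc y = rng e)) => Hy.
- case: (excluded_middle_informative (prepend e y = b)) => H1;
  case: (excluded_middle_informative (y = (@shift E) b)) => H2 //.
  + by case: H2; rewrite -H1 shift_prepend.
  + by case: H1; rewrite H2 -Hb.
- case: (excluded_middle_informative (y = (@shift E) b)) => H2 //.
  by case: Hy; rewrite H2.
Qed.

Lemma opS_delta e (c : rpath E) : psrc c = rng e ->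
  opS e (delta K c) = delta K (prepend e c).
Proof.
move=> Hc; apply functional_extensionality => x; rewrite /opS /delta.
case: (excluded_middle_informative (exists y, x = prepend e y /\ psrc y = rng e)) => Hx.
- case: (Hx) => y [Hxy Hy].
  case: (excluded_middle_informative (shift x = c)) => H1;
  case: (excluded_middle_informative (x = prepend e c)) => H2 //.
  + by case: H2; rewrite -H1 Hxy shift_prepend.
  + by case: H1; rewrite H2 shift_prepend.
- case: (excluded_middle_informative (x = prepend e c)) => H2 //.
  by case: Hx; exists c.
Qed.

Lemma down (b : rpath E) : is_bpath b -> W (delta K b) -> W (delta K (shift b)).
Proof.
move=> Hb Wb; case: (decomp Hb) => [->//|[e [H1 H2]]].
rewrite -(opSs_delta H1 H2); by apply HW.
Qed.

Lemma up (x : rpath E) : is_bpath x -> W (delta K (shift x)) -> W (delta K x).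
Proof.
move=> Hx Wx; case: (decomp Hx) => [<-//|[e [H1 H2]]].
rewrite H1 -(opS_delta H2); by apply HW.
Qed.

Lemma iter_bpath n (b : rpath E) : is_bpath b -> is_bpath (iter n (@shift E) b).
Proof. by elim: n => //= n IH Hb; apply/shift_bpath/IH. Qed.

Lemma downn n (b : rpath E) : is_bpath b -> W (delta K b) -> W (delta K (iter n (@shift E) b)).
Proof. elim: n => //= n IH Hb Wb; apply: down; [exact: iter_bpath | exact: IH]. Qed.

Lemma upn m (x : rpath E) : is_bpath x -> W (delta K (iter m (@shift E) x)) -> W (delta K x).
Proof.
elim: m x => //= m IH x Hx Wx; apply: up => //; apply: IH; first exact: shift_bpath.
by rewrite -iterSr.
Qed.

Lemma class_delta (a b x : rpath E) : in_class a b -> in_class a x ->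
  W (delta K b) -> W (delta K x).
Proof.
move=> [Hb [m1 [n1 E1]]] [Hx [m2 [n2 E2]]] Wb.
apply: (@upn (m1 + n2) x Hx).
have -> : iter (m1 + n2) (@shift E) x = iter (m2 + n1) (@shift E) b.
  by rewrite iterD -E2 -iterD addnC iterD E1 -iterD.
exact: downn.
Qed.

Hypothesis W0 : W (fun _ => 0).
Hypothesis WD : forall f g, W f -> W g -> W (fun x => f x + g x).
Hypothesis WZ : forall (c : K) f, W f -> W (fun x => c * f x).

Lemma finsupp (l : seq (rpath E)) : forall f : rpath E -> K,
  (forall x, f x <> 0 -> List.In x l) -> (forall x, f x <> 0 -> W (delta K x)) -> W f.
Proof.
elim: l => [|x0 l IH] f Hl Hd.
- have -> : f = (fun _ => 0) => //.
  apply functional_extensionality => x; case: (eqVneq (f x) 0) => // /eqP H.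
  by case: (Hl x H).
- case: (eqVneq (f x0) 0) => [H0|/eqP H0].
  + apply: IH => // x Hx; case: (Hl x Hx) => // Hxe; subst x; by case: Hx.
  + set g := fun x => if excluded_middle_informative (x = x0) then 0 else f x.
    have -> : f = (fun x => (fun y => f x0 * delta K x0 y) x + g x).
      apply functional_extensionality => x; rewrite /g /delta.
      case: (excluded_middle_informative (x = x0)) => [Hx|Hx].
      * by subst x; rewrite mulr1 addr0.
      * by rewrite mulr0 add0r.
    apply: WD; first by apply: WZ; apply: Hd.
    have Hg : forall x, g x <> 0 -> x <> x0 /\ f x <> 0.
      move=> x; rewrite /g; case: (excluded_middle_informative (x = x0)) => //.
    apply: IH => x /Hg [Hx Hf].
    * by case: (Hl x Hf) => // Hxe; case: Hx.
    * by apply: Hd.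
Qed.

End Gen.
Section B.
Variables (E : graph) (R : realType).

Lemma sqmod0 : sqmod (0 : R[i]) = 0.
Proof. rewrite /sqmod /=. by rewrite expr0n /= addr0. Qed.
Lemma sqmodN (z : R[i]) : sqmod (- z) = sqmod z.
Proof. case: z => a b /=. by rewrite !sqrrN. Qed.

Lemma In_filter (p : pred (rpath E)) l x : List.In x (filter p l) -> List.In x l.
Proof. elim: l => //= y l IH; case: (p y) => /= [[->|/IH]|/IH]; auto. Qed.

Lemma nodup_filter (p : pred (rpath E)) l : List.NoDup l -> List.NoDup (filter p l).
Proof.
elim: l => //= x l IH /List.NoDup_cons_iff [Hx Hl]; case: (p x) => /=; last exact: IH.
apply List.NoDup_cons; last exact: IH.
by move/In_filter.
Qed.

Lemma catE (l1 l2 : seq (rpath E)) : l1 ++ l2 = List.app l1 l2.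
Proof. by elim: l1 => //= x l1 ->. Qed.

Lemma approx (f : rpath E -> R[i]) : l2 f ->
  exists u : nat -> rpath E -> R[i],
   (forall n, exists l, forall x, u n x <> 0 -> List.In x l) /\
   (forall n x, u n x <> 0 -> f x <> 0) /\ l2_conv u f.
Proof.
move=> [B HB].
pose S : set R := fun r : R => exists l, List.NoDup l /\ r = sqsum l f.
have hS : has_sup S.
  split; first by exists (sqsum [::] f); exists [::]; split => //; constructor.
  by exists B => r [l [Hl ->]]; apply: HB.
have Hn : forall n : nat, exists l, List.NoDup l /\ sup S - (n.+1%:R)^-1 < sqsum l f.
  move=> n; have he : 0 < (n.+1%:R : R)^-1 by rewrite invr_gt0 ltr0Sn.
  have [r [l [Hl ->]] Hr] := sup_adherent he hS.
  by exists l.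
have [L HL] : exists L : nat -> seq (rpath E), forall n,
    List.NoDup (L n) /\ sup S - (n.+1%:R)^-1 < sqsum (L n) f.
  exists (fun n => proj1_sig (constructive_indefinite_description _ (Hn n))).
  move=> n; exact: proj2_sig (constructive_indefinite_description _ (Hn n)).
exists (fun n x => if excluded_middle_informative (List.In x (L n)) then f x else 0).
split; [|split].
- move=> n; exists (L n) => x; by case: excluded_middle_informative.
- move=> n x; by case: excluded_middle_informative.
- move=> eps eps0; exists (Num.truncn (eps^-1)) => n HnN l Hl.
  case: (HL n) => HLn Hsup.
  pose pb := fun x => if excluded_middle_informative (List.In x (L n)) then false else true.
  have -> : sqsum l (fun x => (if excluded_middle_informative (List.In x (L n)) then f x else 0) - f x)
         = sqsum (filter pb l) f.
    rewrite /sqsum big_filter [RHS]big_mkcond /=; apply: eq_bigr => x _.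
    rewrite /pb; case: (excluded_middle_informative (List.In x (L n))) => H /=.
    + by rewrite subrr sqmod0.
    + by rewrite sub0r sqmodN.
  have Hle : sqsum (filter pb l ++ L n) f <= sup S.
    apply: sup_upper_bound => //; exists (filter pb l ++ L n); split => //.
    rewrite catE; apply: List.NoDup_app => //; first exact: nodup_filter.
    move=> x Hx; have := Hx; move/In_filter => _.
    elim: (l) Hx => //= y l' IH; rewrite {1}/pb.
    case: excluded_middle_informative => Hy /=; first exact: IH.
    by case=> [<-|/IH].
  rewrite /sqsum big_cat /= -/(sqsum _ f) -/(sqsum _ f) in Hle.
  have H1 : sqsum (filter pb l) f < (n.+1%:R)^-1.
    rewrite -(ltrD2r (sqsum (L n) f)); apply: (le_lt_trans Hle).
    by rewrite -ltrBlDl.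
  apply/ltW/(lt_le_trans H1).
  have eps_lt : eps^-1 < (Num.truncn (eps^-1)).+1%:R := Num.Theory.truncnS_gt _.
  rewrite -[leRHS]invrK lef_pV2 ?posrE ?invr_gt0 ?ltr0Sn //.
  apply/ltW/(lt_le_trans eps_lt); by rewrite ler_nat.
Qed.
End B.

Theorem lemma3p10 (E : graph) :
  (* (a) *)
  (forall (k : fieldType) (a : rpath E) (W : (rpath E -> k) -> Prop),
     is_bpath a ->
     subspace W -> (forall f, W f -> Vcls a f) -> gen_invariant W ->
     (exists b, in_class a b /\ W (delta k b)) ->
     forall f, W f <-> Vcls a f) /\
  (* (b) *)
  (forall (R : realType) (a : rpath E) (K : (rpath E -> R[i]) -> Prop),
     is_bpath a ->
     csubspace K -> (forall f, K f -> Hcls a f) -> l2_closed a K ->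
     gen_invariant K ->
     (exists b, in_class a b /\ K (delta R[i] b)) ->
     forall f, K f <-> Hcls a f).
Proof.
split.
- move=> k a W Ha [W0 [WD WZ]] HV HW [b [Hb Wb]] f; split; first exact: HV.
  move=> [[l Hl] Hc].
  apply: (finsupp W0 WD WZ Hl) => x /Hc Hx.
  exact: (class_delta HW Hb Hx Wb).
- move=> R a K Ha [K0 [KD KZ]] HH Hcl HK [b [Hb Kb]] f; split; first exact: HH.
  move=> Hf; have [Hl2 Hc] := Hf.
  have [u [Hu1 [Hu2 Hu3]]] := approx Hl2.
  apply: (Hcl u) => // n.
  have [l Hl] := Hu1 n.
  apply: (finsupp K0 KD KZ Hl) => x /Hu2 /Hc Hx.
  exact: (class_delta HK Hb Hx Kb).
Qed.
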